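(* For $\psi\in X_U$, let $G_\psi(u)=u-\psi(u)$, $u>0$; then $G_\psi$ is a bijection $(0,\infty)\to\mathbb R$, and setting $$\Phi_U(\psi)(v)=\frac{-\psi'(G_\psi^{-1}(v))}{1-\psi'(G_\psi^{-1}(v))},\qquad v\in\mathbb R,$$ the map $\Phi_U$ is a bijection from $X_U$ onto $Y_U$. Its inverse is $\Psi_U(\rho)(u)=\zeta^+_\rho\big((\zeta^-_\rho)^{-1}(u)\big)$, $u>0$, where $\zeta^-_\rho(v)=\int_{-\infty}^v(1-\rho(v'))dv'$ and $\zeta^+_\rho(v)=\int_v^\infty\rho(v')dv'$ (both bijections $\mathbb R\to(0,\infty)$).
   Context: $X_U$ is the set of $C^1$ functions $\psi:(0,\infty)\to(0,\infty)$ with $\psi'<0$, $\lim_{u\downarrow0}\psi(u)=\infty$, $\lim_{u\uparrow\infty}\psi(u)=0$. $Y_U$ is the set of continuous $\rho:\mathbb R\to(0,1)$ with $\int_{-\infty}^0(1-\rho(v))dv=\int_0^\infty\rho(v)dv<\infty$. *)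

(* Defs.v *)
From Stdlib Require Import Reals Lra ClassicalEpsilon.
Open Scope R_scope.

(* Choice operator on R (well defined whenever the predicate has a unique witness). *)
Definition Rchoose (P : R -> Prop) : R := epsilon (inhabits 0) P.

Definition upper_int (f : R -> R) (a l : R) : Prop :=
  (forall b, a <= b -> inhabited (Riemann_integrable f a b)) /\
  (forall eps, 0 < eps -> exists M, forall b (pr : Riemann_integrable f a b),
      M <= b -> Rabs (RiemannInt pr - l) < eps).

Definition lower_int (f : R -> R) (a l : R) : Prop :=
  (forall b, b <= a -> inhabited (Riemann_integrable f b a)) /\
  (forall eps, 0 < eps -> exists M, forall b (pr : Riemann_integrable f b a),
      b <= M -> Rabs (RiemannInt pr - l) < eps).

(* X_U : functions on (0,oo) (only values at u > 0 matter). *)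
Definition in_XU (psi : R -> R) : Prop :=
  (forall u, 0 < u -> 0 < psi u) /\
  (exists dpsi : R -> R,
      (forall u, 0 < u -> derivable_pt_lim psi u (dpsi u)) /\
      (forall u, 0 < u -> continuity_pt dpsi u) /\
      (forall u, 0 < u -> dpsi u < 0)) /\
  (forall M, exists delta, 0 < delta /\ forall u, 0 < u < delta -> M < psi u) /\
  (forall eps, 0 < eps -> exists N, forall u, N < u -> Rabs (psi u) < eps).

Definition in_YU (rho : R -> R) : Prop :=
  continuity rho /\
  (forall v, 0 < rho v < 1) /\
  (exists l, lower_int (fun v => 1 - rho v) 0 l /\ upper_int rho 0 l).

Definition der (psi : R -> R) (u : R) : R :=
  Rchoose (fun l => derivable_pt_lim psi u l).

Definition G (psi : R -> R) (u : R) : R := u - psi u.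
Definition Ginv (psi : R -> R) (v : R) : R :=
  Rchoose (fun u => 0 < u /\ G psi u = v).

Definition Phi_U (psi : R -> R) (v : R) : R :=
  - der psi (Ginv psi v) / (1 - der psi (Ginv psi v)).

Definition zeta_minus (rho : R -> R) (v : R) : R :=
  Rchoose (fun l => lower_int (fun w => 1 - rho w) v l).
Definition zeta_plus (rho : R -> R) (v : R) : R :=
  Rchoose (fun l => upper_int rho v l).
Definition zeta_minus_inv (rho : R -> R) (u : R) : R :=
  Rchoose (fun v => zeta_minus rho v = u).

Definition Psi_U (rho : R -> R) (u : R) : R :=
  zeta_plus rho (zeta_minus_inv rho u).

(* Main.v *)
Require Import Defs.
From Stdlib Require Import Reals Lra ClassicalEpsilon FunctionalExtensionality Ranalysis5.
Open Scope R_scope.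


Lemma Rchoose_spec (P : R -> Prop) : (exists x, P x) -> P (Rchoose P).
Proof. intros H. unfold Rchoose. apply epsilon_spec. exact H. Qed.

Lemma Rchoose_eq (P : R -> Prop) x : P x -> (forall y, P y -> y = x) -> Rchoose P = x.
Proof. intros Hx Hu. apply Hu. apply Rchoose_spec. now exists x. Qed.

Lemma der_eq f x l : derivable_pt_lim f x l -> der f x = l.
Proof.
  intros H. unfold der. apply Rchoose_eq; auto.
  intros y Hy. eapply uniqueness_limite; eauto.
Qed.

Lemma FTC_gen (F f : R -> R) a b : a <= b ->
  (forall x, a <= x <= b -> derivable_pt_lim F x (f x)) ->
  (forall x, a <= x <= b -> continuity_pt f x) ->
  forall pr : Riemann_integrable f a b, RiemannInt pr = F b - F a.
Proof.
  intros H HF H0 pr.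
  rewrite (RiemannInt_P20 H (FTC_P1 H H0) pr).
  assert (H1 := RiemannInt_P29 H H0).
  assert (H2 : antiderivative f F a b).
  { split; [|exact H]. intros x Hx.
    exists (exist _ (f x) (HF x Hx)). reflexivity. }
  destruct (antiderivative_Ucte f _ _ _ _ H1 H2) as [C H3].
  rewrite !H3; [ring | lra | lra].
Qed.

Lemma cont_integrable f : continuity f -> forall a b, Riemann_integrable f a b.
Proof.
  intros Hc a b. destruct (Rle_dec a b).
  - apply continuity_implies_RiemannInt; auto.
  - apply RiemannInt_P1. apply continuity_implies_RiemannInt; [lra|auto].
Qed.

Lemma FTC_glob (F f : R -> R) : continuity f ->
  (forall x, derivable_pt_lim F x (f x)) ->
  forall a b (pr : Riemann_integrable f a b), RiemannInt pr = F b - F a.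
Proof.
  intros Hc HF a b pr. destruct (Rle_dec a b).
  - apply FTC_gen; auto.
  - assert (pr2 : Riemann_integrable f b a) by (apply cont_integrable; auto).
    rewrite (RiemannInt_P8 pr pr2). rewrite (FTC_gen F f b a); auto; lra.
Qed.

Lemma lower_int_unique f a l1 l2 : lower_int f a l1 -> lower_int f a l2 -> l1 = l2.
Proof.
  intros [Hi H1] [_ H2].
  destruct (Req_dec l1 l2) as [|Hne]; auto.
  set (e := Rabs (l1 - l2) / 2).
  assert (He : 0 < e) by (assert (0 < Rabs (l1 - l2)) by (apply Rabs_pos_lt; lra); unfold e; lra).
  destruct (H1 e He) as [M1 HM1]. destruct (H2 e He) as [M2 HM2].
  set (b := Rmin M1 (Rmin M2 a)).
  destruct (Hi b) as [pr]. unfold b; apply Rle_trans with (Rmin M2 a); apply Rmin_r.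
  specialize (HM1 b pr (Rmin_l _ _)).
  specialize (HM2 b pr). assert (b <= M2) by (unfold b; apply Rle_trans with (Rmin M2 a); [apply Rmin_r|apply Rmin_l]).
  specialize (HM2 H).
  assert (Rabs (l1 - l2) <= Rabs (RiemannInt pr - l1) + Rabs (RiemannInt pr - l2)).
  { replace (l1 - l2) with (-(RiemannInt pr - l1) + (RiemannInt pr - l2)) by ring.
    eapply Rle_trans; [apply Rabs_triang|]. rewrite Rabs_Ropp. lra. }
  unfold e in *. lra.
Qed.

Lemma upper_int_unique f a l1 l2 : upper_int f a l1 -> upper_int f a l2 -> l1 = l2.
Proof.
  intros [Hi H1] [_ H2].
  destruct (Req_dec l1 l2) as [|Hne]; auto.
  set (e := Rabs (l1 - l2) / 2).
  assert (He : 0 < e) by (assert (0 < Rabs (l1 - l2)) by (apply Rabs_pos_lt; lra); unfold e; lra).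
  destruct (H1 e He) as [M1 HM1]. destruct (H2 e He) as [M2 HM2].
  set (b := Rmax M1 (Rmax M2 a)).
  destruct (Hi b) as [pr]. unfold b; apply Rle_trans with (Rmax M2 a); apply Rmax_r.
  specialize (HM1 b pr (Rmax_l _ _)).
  specialize (HM2 b pr). assert (M2 <= b) by (unfold b; apply Rle_trans with (Rmax M2 a); [apply Rmax_l|apply Rmax_r]).
  specialize (HM2 H).
  assert (Rabs (l1 - l2) <= Rabs (RiemannInt pr - l1) + Rabs (RiemannInt pr - l2)).
  { replace (l1 - l2) with (-(RiemannInt pr - l1) + (RiemannInt pr - l2)) by ring.
    eapply Rle_trans; [apply Rabs_triang|]. rewrite Rabs_Ropp. lra. }
  unfold e in *. lra.
Qed.

Lemma lower_int_anti (F f : R -> R) a l : continuity f ->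
  (forall x, derivable_pt_lim F x (f x)) ->
  (forall eps, 0 < eps -> exists M, forall b, b <= M -> Rabs (F a - F b - l) < eps) ->
  lower_int f a l.
Proof.
  intros Hc HF Hl. split.
  - intros b _. constructor. apply cont_integrable; auto.
  - intros eps He. destruct (Hl eps He) as [M HM]. exists M. intros b pr Hb.
    rewrite (FTC_glob F f Hc HF). auto.
Qed.

Lemma upper_int_anti (F f : R -> R) a l : continuity f ->
  (forall x, derivable_pt_lim F x (f x)) ->
  (forall eps, 0 < eps -> exists M, forall b, M <= b -> Rabs (F b - F a - l) < eps) ->
  upper_int f a l.
Proof.
  intros Hc HF Hl. split.
  - intros b _. constructor. apply cont_integrable; auto.
  - intros eps He. destruct (Hl eps He) as [M HM]. exists M. intros b pr Hb.
    rewrite (FTC_glob F f Hc HF). auto.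
Qed.

Lemma incr_from_deriv (f f' : R -> R) (P : R -> Prop) :
  (forall x y z, P x -> P z -> x <= y <= z -> P y) ->
  (forall x, P x -> derivable_pt_lim f x (f' x)) ->
  (forall x, P x -> 0 < f' x) ->
  forall x y, P x -> P y -> x < y -> f x < f y.
Proof.
  intros Hconv Hd Hp x y Px Py Hxy.
  assert (Hd' : forall c, x <= c <= y -> derivable_pt_lim f c (f' c)).
  { intros c Hc. apply Hd. exact (Hconv x c y Px Py Hc). }
  destruct (MVT_cor2 f f' x y Hxy Hd') as [c [Hc Hc2]].
  assert (P c) by (apply (Hconv x c y Px Py); lra).
  specialize (Hp c H). assert (0 < f' c * (y - x)) by (apply Rmult_lt_0_compat; lra). lra.
Qed.

Lemma deriv_integral f (Hc : continuity f) a x :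
  derivable_pt_lim (fun y => RiemannInt (cont_integrable f Hc a y)) x (f x).
Proof.
  assert (h : x - 1 <= x + 1) by lra.
  assert (C0 : forall y, x - 1 <= y <= x + 1 -> continuity_pt f y) by (intros; apply Hc).
  assert (Hd := @RiemannInt_P27 f (x-1) (x+1) x h C0 ltac:(lra)).
  set (P := primitive h (FTC_P1 h C0)) in *.
  set (C := RiemannInt (cont_integrable f Hc a (x-1))).
  assert (Hd2 : derivable_pt_lim (fun y => C + P y) x (f x)).
  { apply derivable_pt_lim_ext with (f := (fct_cte C + P)%F). { intros; reflexivity. }
    replace (f x) with (0 + f x) by ring. apply derivable_pt_lim_plus; auto.
    apply derivable_pt_lim_const. }
  apply (derivable_pt_lim_locally_ext (fun y => C + P y) _ x (x-1) (x+1)); [lra| |exact Hd2].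
  intros z Hz. unfold P, primitive.
  destruct (Rle_dec (x-1) z); [|lra]. destruct (Rle_dec z (x+1)); [|lra].
  cbv beta. unfold C. apply RiemannInt_P26.
Qed.
Lemma inv_deriv (f f' g : R -> R) (a b y : R) :
  a < b ->
  (forall x z, a <= x -> x < z -> z <= b -> f x < f z) ->
  (forall x, a <= x <= b -> derivable_pt_lim f x (f' x)) ->
  (forall z, f a <= z <= f b -> a <= g z <= b /\ f (g z) = z) ->
  f a < y < f b -> f' (g y) <> 0 ->
  continuity_pt g y /\ derivable_pt_lim g y (1 / f' (g y)).
Proof.
  intros Hab Hinc Hd Hg Hy Hnz.
  assert (Hcont : forall x, a <= x <= b -> continuity_pt f x).
  { intros x Hx. apply derivable_continuous_pt. exists (f' x). apply Hd; auto. }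
  assert (Hcg : continuity_pt g y).
  { apply (continuity_pt_recip_interv f g a b Hab Hinc); auto.
    - intros x H1 H2. unfold comp, id. apply Hg; lra.
    - intros x H1 H2. apply Hg; lra. }
  split; [exact Hcg|].
  assert (Hrefl : forall x z, a <= x <= b -> a <= z <= b -> f x <= f z -> x <= z).
  { intros x z Hx Hz Hf. destruct (Rle_dec x z); auto.
    assert (f z < f x) by (apply Hinc; lra). lra. }
  assert (Hga : a <= g (f a) <= b /\ f (g (f a)) = f a) by (apply Hg; lra).
  assert (Hgb : a <= g (f b) <= b /\ f (g (f b)) = f b) by (apply Hg; lra).
  assert (Hgy : a <= g y <= b /\ f (g y) = y) by (apply Hg; lra).
  assert (Prf : forall x, g (f a) <= x <= g (f b) -> derivable_pt f x).
  { intros x Hx. exists (f' x). apply Hd. lra. }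
  assert (Prg_incr : g (f a) <= g y <= g (f b)).
  { split; apply Hrefl; try lra. }
  assert (Hlt : f a < f b) by lra.
  assert (Hc : forall x, f a <= x <= f b -> comp f g x = id x).
  { intros x Hx. unfold comp, id. apply Hg; lra. }
  assert (Hder : derive_pt f (g y) (Prf (g y) Prg_incr) = f' (g y)).
  { apply derive_pt_eq_0. apply Hd. lra. }
  assert (H := derivable_pt_lim_recip_interv f g (f a) (f b) y Prf Hcg Hlt Hy Prg_incr Hc).
  rewrite Hder in H. apply H. exact Hnz.
Qed.

Definition XUd (psi d : R -> R) : Prop :=
  (forall u, 0 < u -> 0 < psi u) /\
  (forall u, 0 < u -> derivable_pt_lim psi u (d u)) /\
  (forall u, 0 < u -> continuity_pt d u) /\
  (forall u, 0 < u -> d u < 0) /\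
  (forall M, exists delta, 0 < delta /\ forall u, 0 < u < delta -> M < psi u) /\
  (forall eps, 0 < eps -> exists N, forall u, N < u -> Rabs (psi u) < eps).

Lemma XU_XUd psi : in_XU psi -> exists d, XUd psi d.
Proof.
  intros [H1 [[d [H2 [H3 H4]]] [H5 H6]]]. exists d. repeat split; auto.
Qed.

Lemma G_deriv psi d : XUd psi d -> forall u, 0 < u -> derivable_pt_lim (G psi) u (1 - d u).
Proof.
  intros (H1 & H2 & H3 & H4 & H5 & H6) u Hu.
  apply derivable_pt_lim_ext with (f := (id - psi)%F). { intros; reflexivity. }
  apply derivable_pt_lim_minus; [apply derivable_pt_lim_id | auto].
Qed.

Lemma pos_conv : forall x y z, 0 < x -> 0 < z -> x <= y <= z -> 0 < y.
Proof. intros; lra. Qed.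

Lemma G_incr psi d : XUd psi d -> forall x y, 0 < x -> x < y -> G psi x < G psi y.
Proof.
  intros H x y Hx Hxy.
  apply (incr_from_deriv (G psi) (fun u => 1 - d u) (fun u => 0 < u)); auto; try lra.
  - exact pos_conv.
  - apply G_deriv; auto.
  - intros u Hu. destruct H as (H1 & H2 & H3 & H4 & H5 & H6). specialize (H4 u Hu). lra.
Qed.

Lemma psi_decr psi d : XUd psi d -> forall x y, 0 < x -> x < y -> psi y < psi x.
Proof.
  intros H x y Hx Hxy.
  cut (- psi x < - psi y); [lra|].
  apply (incr_from_deriv (fun u => - psi u) (fun u => - d u) (fun u => 0 < u)); auto; try lra.
  - exact pos_conv.
  - intros u Hu. destruct H as (H1 & H2 & H3 & H4 & H5 & H6).
    apply derivable_pt_lim_ext with (f := (- psi)%F). { intros; reflexivity. }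
    apply derivable_pt_lim_opp; auto.
  - intros u Hu. destruct H as (H1 & H2 & H3 & H4 & H5 & H6). specialize (H4 u Hu). lra.
Qed.

Lemma G_inj psi d : XUd psi d -> forall x y, 0 < x -> 0 < y -> G psi x = G psi y -> x = y.
Proof.
  intros H x y Hx Hy Heq. destruct (Rtotal_order x y) as [Hl|[He|Hl]]; auto.
  - assert (G psi x < G psi y) by (eapply G_incr; eauto). lra.
  - assert (G psi y < G psi x) by (eapply G_incr; eauto). lra.
Qed.

Lemma G_exists psi d : XUd psi d -> forall v, exists u, 0 < u /\ G psi u = v.
Proof.
  intros H v. pose proof H as (H1 & H2 & H3 & H4 & H5 & H6).
  destruct (H5 (Rabs v + 1)) as [delta [Hdel Hpsi]].
  set (a := Rmin (delta/2) 1).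
  assert (Ha : 0 < a) by (unfold a; apply Rmin_pos; lra).
  assert (Ha1 : a <= 1) by (unfold a; apply Rmin_r).
  assert (Ha2 : a <= delta/2) by (unfold a; apply Rmin_l).
  assert (HGa : G psi a < v).
  { unfold G. specialize (Hpsi a ltac:(lra)). pose proof (Rle_abs (-v)). rewrite Rabs_Ropp in H0. lra. }
  destruct (H6 1 ltac:(lra)) as [N HN].
  set (b := Rmax N a + Rabs v + 2).
  assert (Hb : a < b) by (unfold b; pose proof (Rmax_r N a); pose proof (Rabs_pos v); lra).
  assert (HGb : v < G psi b).
  { unfold G. assert (N < b) by (unfold b; pose proof (Rmax_l N a); pose proof (Rabs_pos v); lra).
    specialize (HN b H0). pose proof (Rle_abs (psi b)). pose proof (Rle_abs v).
    unfold b in *. pose proof (Rmax_r N a). lra. }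
  destruct (IVT_interv (fun u => G psi u - v) a b) as [z [Hz1 Hz2]]; auto; try lra.
  - intros x Hx. apply continuity_pt_minus; [|apply continuity_pt_const; intros ??; reflexivity].
    apply derivable_continuous_pt. exists (1 - d x). apply G_deriv; auto; lra.
  - exists z. split; lra.
Qed.

Lemma G_bij psi d : XUd psi d -> forall v, exists! u, 0 < u /\ G psi u = v.
Proof.
  intros H v. destruct (G_exists psi d H v) as [u Hu]. exists u. split; auto.
  intros u' [Hu' Heq]. eapply G_inj; eauto. lra. lra.
Qed.

Lemma Gi_spec psi d : XUd psi d -> forall v, 0 < Ginv psi v /\ G psi (Ginv psi v) = v.
Proof.
  intros H v. unfold Ginv. apply Rchoose_spec. eapply G_exists; eauto.
Qed.

Lemma Gi_G psi d : XUd psi d -> forall u, 0 < u -> Ginv psi (G psi u) = u.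
Proof.
  intros H u Hu. destruct (Gi_spec psi d H (G psi u)) as [H1 H2].
  eapply G_inj; eauto.
Qed.

Lemma Gi_incr psi d : XUd psi d -> forall v w, v < w -> Ginv psi v < Ginv psi w.
Proof.
  intros H v w Hvw. destruct (Gi_spec psi d H v) as [A1 A2]. destruct (Gi_spec psi d H w) as [B1 B2].
  destruct (Rlt_dec (Ginv psi v) (Ginv psi w)); auto.
  destruct (Req_dec (Ginv psi v) (Ginv psi w)) as [E|E].
  - rewrite E in A2. lra.
  - assert (G psi (Ginv psi w) < G psi (Ginv psi v)) by (apply (G_incr psi d H); lra). lra.
Qed.

Lemma Gi_le psi d : XUd psi d -> forall v w, v <= w -> Ginv psi v <= Ginv psi w.
Proof.
  intros H v w [Hl|E]. - left. eapply Gi_incr; eauto. - subst; lra.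
Qed.

Lemma Gi_deriv psi d : XUd psi d -> forall v,
  continuity_pt (Ginv psi) v /\ derivable_pt_lim (Ginv psi) v (1 / (1 - d (Ginv psi v))).
Proof.
  intros H v.
  pose proof (Gi_spec psi d H (v-1)) as [A1 A2].
  pose proof (Gi_spec psi d H (v+1)) as [B1 B2].
  pose proof (Gi_incr psi d H (v-1) (v+1) ltac:(lra)).
  apply (inv_deriv (G psi) (fun u => 1 - d u) (Ginv psi) (Ginv psi (v-1)) (Ginv psi (v+1)) v); auto.
  - intros x z Hx Hxz Hz. apply (G_incr psi d H); lra.
  - intros x Hx. apply G_deriv; auto; lra.
  - intros z Hz. rewrite A2, B2 in Hz. split; [split|]; try apply (Gi_le psi d H); try lra.
    apply Gi_spec with d; auto.
  - rewrite A2, B2; lra.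
  - pose proof (Gi_spec psi d H v) as [C1 _]. destruct H as (H1 & H2 & H3 & H4 & H5 & H6).
    specialize (H4 _ C1). lra.
Qed.

Lemma Phi_formula psi d : XUd psi d ->
  Phi_U psi = fun v => - d (Ginv psi v) / (1 - d (Ginv psi v)).
Proof.
  intros H. apply functional_extensionality. intros v. unfold Phi_U.
  pose proof (Gi_spec psi d H v) as [C1 _].
  rewrite (der_eq psi (Ginv psi v) (d (Ginv psi v))); auto.
  apply H; auto.
Qed.

Lemma dGi_cont psi d : XUd psi d -> forall v, continuity_pt (fun v => d (Ginv psi v)) v.
Proof.
  intros H v. pose proof (Gi_deriv psi d H v) as [Hc _].
  pose proof (Gi_spec psi d H v) as [C1 _].
  apply (continuity_pt_comp (Ginv psi) d v Hc). apply H; auto.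
Qed.

Lemma dGi_neg psi d : XUd psi d -> forall v, d (Ginv psi v) < 0.
Proof.
  intros H v. pose proof (Gi_spec psi d H v) as [C1 _]. apply H; auto.
Qed.

Lemma rho_cont psi d : XUd psi d ->
  continuity (fun v => - d (Ginv psi v) / (1 - d (Ginv psi v))).
Proof.
  intros H v.
  pose proof (dGi_cont psi d H v) as Hc.
  pose proof (dGi_neg psi d H v).
  apply (continuity_pt_div (fun v => - d (Ginv psi v)) (fun v => 1 - d (Ginv psi v))).
  - apply (continuity_pt_opp (fun v => d (Ginv psi v))). auto.
  - apply (continuity_pt_minus (fun _ => 1) (fun v => d (Ginv psi v))); auto.
    apply continuity_pt_const. intros ??; reflexivity.
  - lra.
Qed.

Lemma rho1_cont psi d : XUd psi d ->
  continuity (fun v => 1 - - d (Ginv psi v) / (1 - d (Ginv psi v))).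
Proof.
  intros H v. apply (continuity_pt_minus (fun _ => 1) (fun v => - d (Ginv psi v) / (1 - d (Ginv psi v)))).
  - apply continuity_pt_const. intros ??; reflexivity.
  - apply rho_cont; auto.
Qed.

Lemma Phi_lower psi d : XUd psi d -> forall v,
  lower_int (fun w => 1 - - d (Ginv psi w) / (1 - d (Ginv psi w))) v (Ginv psi v).
Proof.
  intros H v. apply lower_int_anti with (F := Ginv psi).
  - apply rho1_cont; auto.
  - intros x. pose proof (Gi_deriv psi d H x) as [_ Hd].
    pose proof (dGi_neg psi d H x).
    replace (1 - - d (Ginv psi x) / (1 - d (Ginv psi x))) with (1 / (1 - d (Ginv psi x))); auto.
    field. lra.
  - intros eps He. exists (G psi (eps/2)). intros b Hb.
    pose proof (Gi_le psi d H _ _ Hb). rewrite (Gi_G psi d H) in H0 by lra.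
    pose proof (Gi_spec psi d H b) as [C1 _].
    replace (Ginv psi v - Ginv psi b - Ginv psi v) with (- Ginv psi b) by ring.
    rewrite Rabs_Ropp, Rabs_right; lra.
Qed.

Lemma Phi_upper psi d : XUd psi d -> forall v,
  upper_int (fun w => - d (Ginv psi w) / (1 - d (Ginv psi w))) v (psi (Ginv psi v)).
Proof.
  intros H v. apply upper_int_anti with (F := fun w => - psi (Ginv psi w)).
  - apply rho_cont; auto.
  - intros x. pose proof (Gi_deriv psi d H x) as [_ Hd].
    pose proof (dGi_neg psi d H x).
    pose proof (Gi_spec psi d H x) as [C1 _].
    assert (Hp : derivable_pt_lim psi (Ginv psi x) (d (Ginv psi x))) by (apply H; auto).
    pose proof (derivable_pt_lim_comp _ _ _ _ _ Hd Hp) as Hc.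
    apply derivable_pt_lim_ext with (f := opp_fct (comp psi (Ginv psi))). { intros; reflexivity. }
    replace (- d (Ginv psi x) / (1 - d (Ginv psi x))) with (- (d (Ginv psi x) * (1 / (1 - d (Ginv psi x))))).
    + apply derivable_pt_lim_opp. exact Hc.
    + field. lra.
  - intros eps He. pose proof H as (H1 & H2 & H3 & H4 & H5 & H6).
    destruct (H6 eps He) as [N HN].
    exists (G psi (Rmax N 1 + 1)). intros b Hb.
    pose proof (Gi_le psi d H _ _ Hb). rewrite (Gi_G psi d H) in H0 by (pose proof (Rmax_r N 1); lra).
    replace (- psi (Ginv psi b) - - psi (Ginv psi v) - psi (Ginv psi v)) with (- psi (Ginv psi b)) by ring.
    rewrite Rabs_Ropp. apply HN. pose proof (Rmax_l N 1). lra.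
Qed.

Lemma Phi_YU psi d : XUd psi d -> in_YU (Phi_U psi).
Proof.
  intros H. rewrite (Phi_formula psi d H). split; [|split].
  - apply rho_cont; auto.
  - intros v. pose proof (dGi_neg psi d H v). split.
    + apply Rdiv_lt_0_compat; lra.
    + apply Rmult_lt_reg_r with (1 - d (Ginv psi v)); [lra|]. unfold Rdiv.
      rewrite Rmult_assoc, Rinv_l by lra. lra.
  - exists (Ginv psi 0). split.
    + apply Phi_lower; auto.
    + pose proof (Gi_spec psi d H 0) as [C1 C2].
      assert (Heq : psi (Ginv psi 0) = Ginv psi 0) by (unfold G in C2; lra).
      pose proof (Phi_upper psi d H 0) as HU. rewrite Heq in HU. exact HU.
Qed.

Lemma cont_1m rho : continuity rho -> continuity (fun w => 1 - rho w).
Proof.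
  intros Hc v. apply (continuity_pt_minus (fun _ => 1) rho); auto.
  apply continuity_pt_const. intros ??; reflexivity.
Qed.

Definition Zm rho (Hc : continuity rho) l v :=
  l + RiemannInt (cont_integrable _ (cont_1m rho Hc) 0 v).
Definition Zp rho (Hc : continuity rho) l v :=
  l - RiemannInt (cont_integrable rho Hc 0 v).

Definition YUd rho l :=
  (forall v, 0 < rho v < 1) /\ lower_int (fun v => 1 - rho v) 0 l /\ upper_int rho 0 l.

Lemma Zm_lower rho Hc l : YUd rho l -> forall v,
  lower_int (fun w => 1 - rho w) v (Zm rho Hc l v).
Proof.
  intros (H1 & [_ H2] & H3) v. split.
  - intros b _. constructor. apply cont_integrable, cont_1m; auto.
  - intros eps He. destruct (H2 eps He) as [M HM]. exists (Rmin M v).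
    intros b pr Hb.
    pose proof (cont_integrable _ (cont_1m rho Hc) b 0) as pr1.
    rewrite <- (RiemannInt_P26 pr1 (cont_integrable _ (cont_1m rho Hc) 0 v) pr).
    unfold Zm. replace (RiemannInt pr1 + RiemannInt (cont_integrable (fun w : R => 1 - rho w) (cont_1m rho Hc) 0 v) -
   (l + RiemannInt (cont_integrable (fun w : R => 1 - rho w) (cont_1m rho Hc) 0 v))) with (RiemannInt pr1 - l) by ring.
    apply HM. pose proof (Rmin_l M v). lra.
Qed.

Lemma Zp_upper rho Hc l : YUd rho l -> forall v,
  upper_int rho v (Zp rho Hc l v).
Proof.
  intros (H1 & H2 & [_ H3]) v. split.
  - intros b _. constructor. apply cont_integrable; auto.
  - intros eps He. destruct (H3 eps He) as [M HM]. exists (Rmax M v).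
    intros b pr Hb.
    pose proof (cont_integrable _ Hc 0 b) as pr1.
    pose proof (cont_integrable _ Hc v 0) as pr2.
    rewrite <- (RiemannInt_P26 pr2 pr1 pr).
    rewrite (RiemannInt_P8 pr2 (cont_integrable rho Hc 0 v)).
    unfold Zp. replace (- RiemannInt (cont_integrable rho Hc 0 v) + RiemannInt pr1 -
      (l - RiemannInt (cont_integrable rho Hc 0 v))) with (RiemannInt pr1 - l) by ring.
    apply HM. pose proof (Rmax_l M v). lra.
Qed.

Lemma Zm_deriv rho Hc l v : derivable_pt_lim (Zm rho Hc l) v (1 - rho v).
Proof.
  apply derivable_pt_lim_ext with
    (f := (fct_cte l + (fun y => RiemannInt (cont_integrable _ (cont_1m rho Hc) 0 y)))%F).
  { intros; reflexivity. }
  replace (1 - rho v) with (0 + (1 - rho v)) by ring.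
  apply derivable_pt_lim_plus; [apply derivable_pt_lim_const|].
  apply (deriv_integral (fun w => 1 - rho w)).
Qed.

Lemma Zp_deriv rho Hc l v : derivable_pt_lim (Zp rho Hc l) v (- rho v).
Proof.
  apply derivable_pt_lim_ext with
    (f := (fct_cte l - (fun y => RiemannInt (cont_integrable _ Hc 0 y)))%F).
  { intros; reflexivity. }
  replace (- rho v) with (0 - rho v) by ring.
  apply derivable_pt_lim_minus; [apply derivable_pt_lim_const|].
  apply deriv_integral.
Qed.

Lemma Zm_Zp rho Hc l v : Zm rho Hc l v - Zp rho Hc l v = v.
Proof.
  set (h := fun x => Zm rho Hc l x - Zp rho Hc l x - x).
  assert (Hd : forall x, derivable_pt_lim h x 0).
  { intros x. apply derivable_pt_lim_ext with (f := ((Zm rho Hc l - Zp rho Hc l) - id)%F).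
    { intros; reflexivity. }
    replace 0 with ((1 - rho x) - - rho x - 1) by ring.
    apply derivable_pt_lim_minus; [|apply derivable_pt_lim_id].
    apply derivable_pt_lim_minus; [apply Zm_deriv|apply Zp_deriv]. }
  assert (h0 : h 0 = 0).
  { unfold h, Zm, Zp. rewrite !RiemannInt_P9. ring. }
  assert (h v = 0).
  { destruct (Rtotal_order 0 v) as [Hl|[He|Hl]].
    - destruct (MVT_cor2 h (fun _ => 0) 0 v Hl) as [c [Hc1 _]]; [intros; apply Hd|]. lra.
    - subst; auto.
    - destruct (MVT_cor2 h (fun _ => 0) v 0 Hl) as [c [Hc1 _]]; [intros; apply Hd|]. lra. }
  unfold h in H. lra.
Qed.

Lemma Zm_incr rho Hc l : YUd rho l -> forall x y, x < y -> Zm rho Hc l x < Zm rho Hc l y.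
Proof.
  intros H x y Hxy.
  apply (incr_from_deriv _ (fun v => 1 - rho v) (fun _ => True)); auto.
  - intros; apply Zm_deriv.
  - intros v _. destruct H as [H _]. specialize (H v). lra.
Qed.

Lemma Zp_decr rho Hc l : YUd rho l -> forall x y, x < y -> Zp rho Hc l y < Zp rho Hc l x.
Proof.
  intros H x y Hxy.
  cut (- Zp rho Hc l x < - Zp rho Hc l y); [lra|].
  apply (incr_from_deriv (fun v => - Zp rho Hc l v) rho (fun _ => True)); auto.
  - intros v _. apply derivable_pt_lim_ext with (f := (- Zp rho Hc l)%F). { intros; reflexivity. }
    replace (rho v) with (- - rho v) by ring. apply derivable_pt_lim_opp, Zp_deriv.
  - intros v _. destruct H as [H _]. specialize (H v). lra.
Qed.

Lemma Zm_lim0 rho Hc l : YUd rho l -> forall eps, 0 < eps ->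
  exists M, forall b, b <= M -> Rabs (Zm rho Hc l b) < eps.
Proof.
  intros (H1 & [_ H2] & H3) eps He. destruct (H2 eps He) as [M HM]. exists (Rmin M 0).
  intros b Hb.
  pose proof (cont_integrable _ (cont_1m rho Hc) b 0) as pr1.
  unfold Zm. rewrite (RiemannInt_P8 _ pr1).
  replace (l + - RiemannInt pr1) with (- (RiemannInt pr1 - l)) by ring.
  rewrite Rabs_Ropp. apply HM. pose proof (Rmin_l M 0). lra.
Qed.

Lemma Zp_lim0 rho Hc l : YUd rho l -> forall eps, 0 < eps ->
  exists M, forall b, M <= b -> Rabs (Zp rho Hc l b) < eps.
Proof.
  intros (H1 & H2 & [_ H3]) eps He. destruct (H3 eps He) as [M HM]. exists M.
  intros b Hb. unfold Zp.
  replace (l - RiemannInt (cont_integrable rho Hc 0 b)) with (- (RiemannInt (cont_integrable rho Hc 0 b) - l)) by ring.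
  rewrite Rabs_Ropp. apply HM. lra.
Qed.

Lemma Zm_pos rho Hc l : YUd rho l -> forall v, 0 < Zm rho Hc l v.
Proof.
  intros H v. destruct (Rlt_dec 0 (Zm rho Hc l v)) as [|Hn]; auto.
  pose proof (Zm_incr rho Hc l H (v-1) v ltac:(lra)).
  destruct (Zm_lim0 rho Hc l H (- Zm rho Hc l (v-1)) ltac:(lra)) as [M HM].
  set (b := Rmin M (v-1)).
  specialize (HM b (Rmin_l _ _)).
  assert (Zm rho Hc l b <= Zm rho Hc l (v-1)).
  { destruct (Req_dec b (v-1)) as [E|E]; [rewrite E; lra|].
    left. apply Zm_incr; auto. pose proof (Rmin_r M (v-1)). fold b in H1. lra. }
  rewrite Rabs_left in HM; lra.
Qed.

Lemma Zp_pos rho Hc l : YUd rho l -> forall v, 0 < Zp rho Hc l v.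
Proof.
  intros H v. destruct (Rlt_dec 0 (Zp rho Hc l v)) as [|Hn]; auto.
  pose proof (Zp_decr rho Hc l H v (v+1) ltac:(lra)).
  destruct (Zp_lim0 rho Hc l H (- Zp rho Hc l (v+1)) ltac:(lra)) as [M HM].
  set (b := Rmax M (v+1)).
  specialize (HM b (Rmax_l _ _)).
  assert (Zp rho Hc l b <= Zp rho Hc l (v+1)).
  { destruct (Req_dec b (v+1)) as [E|E]; [rewrite E; lra|].
    left. apply Zp_decr; auto. pose proof (Rmax_r M (v+1)). fold b in H1. lra. }
  rewrite Rabs_left in HM; lra.
Qed.

Lemma Zm_cont rho Hc l v : continuity_pt (Zm rho Hc l) v.
Proof. apply derivable_continuous_pt. exists (1 - rho v). apply Zm_deriv. Qed.
Lemma Zp_cont rho Hc l v : continuity_pt (Zp rho Hc l) v.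
Proof. apply derivable_continuous_pt. exists (- rho v). apply Zp_deriv. Qed.

Lemma Zm_inj rho Hc l : YUd rho l -> forall x y, Zm rho Hc l x = Zm rho Hc l y -> x = y.
Proof.
  intros H x y E. destruct (Rtotal_order x y) as [Hl|[He|Hl]]; auto.
  - pose proof (Zm_incr rho Hc l H x y Hl). lra.
  - pose proof (Zm_incr rho Hc l H y x Hl). lra.
Qed.

Lemma Zp_inj rho Hc l : YUd rho l -> forall x y, Zp rho Hc l x = Zp rho Hc l y -> x = y.
Proof.
  intros H x y E. destruct (Rtotal_order x y) as [Hl|[He|Hl]]; auto.
  - pose proof (Zp_decr rho Hc l H x y Hl). lra.
  - pose proof (Zp_decr rho Hc l H y x Hl). lra.
Qed.

Lemma Zm_ex rho Hc l : YUd rho l -> forall u, 0 < u -> exists v, Zm rho Hc l v = u.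
Proof.
  intros H u Hu. destruct (Zm_lim0 rho Hc l H u Hu) as [a Ha].
  specialize (Ha a (Rle_refl a)).
  set (b := Rmax a u + 1).
  assert (Hab : a < b) by (unfold b; pose proof (Rmax_l a u); lra).
  assert (Hb : u < Zm rho Hc l b).
  { pose proof (Zm_Zp rho Hc l b). pose proof (Zp_pos rho Hc l H b).
    unfold b in *. pose proof (Rmax_r a u). lra. }
  pose proof (Rle_abs (Zm rho Hc l a)).
  destruct (IVT_interv (fun v => Zm rho Hc l v - u) a b) as [z [_ Hz]]; auto; try lra.
  - intros x _. apply continuity_pt_minus; [apply Zm_cont|].
    apply continuity_pt_const; intros ??; reflexivity.
  - exists z. lra.
Qed.

Lemma Zp_ex rho Hc l : YUd rho l -> forall u, 0 < u -> exists v, Zp rho Hc l v = u.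
Proof.
  intros H u Hu. destruct (Zp_lim0 rho Hc l H u Hu) as [b Hb].
  specialize (Hb b (Rle_refl b)).
  set (a := Rmin (-u) b - 1).
  assert (Hab : a < b) by (unfold a; pose proof (Rmin_r (-u) b); lra).
  assert (Ha : u < Zp rho Hc l a).
  { pose proof (Zm_Zp rho Hc l a). pose proof (Zm_pos rho Hc l H a).
    unfold a in *. pose proof (Rmin_l (-u) b). lra. }
  pose proof (Rle_abs (Zp rho Hc l b)).
  destruct (IVT_interv (fun v => u - Zp rho Hc l v) a b) as [z [_ Hz]]; auto; try lra.
  - intros x _. apply continuity_pt_minus; [|apply Zp_cont].
    apply continuity_pt_const; intros ??; reflexivity.
  - exists z. lra.
Qed.

Definition Zmi rho Hc l u := Rchoose (fun v => Zm rho Hc l v = u).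

Lemma Zmi_spec rho Hc l : YUd rho l -> forall u, 0 < u -> Zm rho Hc l (Zmi rho Hc l u) = u.
Proof. intros H u Hu. unfold Zmi. apply Rchoose_spec. apply Zm_ex; auto. Qed.

Lemma Zmi_Zm rho Hc l : YUd rho l -> forall v, Zmi rho Hc l (Zm rho Hc l v) = v.
Proof.
  intros H v. apply (Zm_inj rho Hc l H). apply Zmi_spec; auto. apply Zm_pos; auto.
Qed.

Lemma Zmi_lt rho Hc l : YUd rho l -> forall u w, 0 < u -> Zm rho Hc l w <= u -> w <= Zmi rho Hc l u.
Proof.
  intros H u w Hu Hw. destruct (Rle_dec w (Zmi rho Hc l u)) as [|Hn]; auto.
  pose proof (Zm_incr rho Hc l H (Zmi rho Hc l u) w ltac:(lra)). rewrite Zmi_spec in H0; auto. lra.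
Qed.

Lemma Zmi_gt rho Hc l : YUd rho l -> forall u w, 0 < u -> u <= Zm rho Hc l w -> Zmi rho Hc l u <= w.
Proof.
  intros H u w Hu Hw. destruct (Rle_dec (Zmi rho Hc l u) w) as [|Hn]; auto.
  pose proof (Zm_incr rho Hc l H w (Zmi rho Hc l u) ltac:(lra)). rewrite Zmi_spec in H0; auto. lra.
Qed.

Lemma Zmi_deriv rho Hc l : YUd rho l -> forall u, 0 < u ->
  continuity_pt (Zmi rho Hc l) u /\
  derivable_pt_lim (Zmi rho Hc l) u (1 / (1 - rho (Zmi rho Hc l u))).
Proof.
  intros H u Hu.
  pose proof (Zmi_spec rho Hc l H (u/2) ltac:(lra)) as A.
  pose proof (Zmi_spec rho Hc l H (2*u) ltac:(lra)) as B.
  assert (Hab : Zmi rho Hc l (u/2) < Zmi rho Hc l (2*u)).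
  { destruct (Rlt_dec (Zmi rho Hc l (u/2)) (Zmi rho Hc l (2*u))) as [|Hn]; auto.
    destruct (Req_dec (Zmi rho Hc l (u/2)) (Zmi rho Hc l (2*u))) as [E|E].
    - rewrite E in A. lra.
    - pose proof (Zm_incr rho Hc l H (Zmi rho Hc l (2*u)) (Zmi rho Hc l (u/2)) ltac:(lra)). lra. }
  apply (inv_deriv (Zm rho Hc l) (fun v => 1 - rho v) (Zmi rho Hc l) _ _ u Hab).
  - intros x z _ Hxz _. apply Zm_incr; auto.
  - intros x _. apply Zm_deriv.
  - intros z Hz. rewrite A, B in Hz. split; [split|].
    + apply Zmi_lt; auto; lra.
    + apply Zmi_gt; auto; lra.
    + apply Zmi_spec; auto; lra.
  - rewrite A, B. lra.
  - destruct H as [H _]. specialize (H (Zmi rho Hc l u)). lra.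
Qed.

Lemma zeta_minus_eq rho Hc l : YUd rho l -> zeta_minus rho = Zm rho Hc l.
Proof.
  intros H. apply functional_extensionality. intros v. unfold zeta_minus.
  apply Rchoose_eq. - apply Zm_lower; auto.
  - intros y Hy. eapply lower_int_unique; eauto. apply Zm_lower; auto.
Qed.

Lemma zeta_plus_eq rho Hc l : YUd rho l -> zeta_plus rho = Zp rho Hc l.
Proof.
  intros H. apply functional_extensionality. intros v. unfold zeta_plus.
  apply Rchoose_eq. - apply Zp_upper; auto.
  - intros y Hy. eapply upper_int_unique; eauto. apply Zp_upper; auto.
Qed.

Lemma Psi_eq rho Hc l : YUd rho l -> Psi_U rho = fun u => Zp rho Hc l (Zmi rho Hc l u).
Proof.
  intros H. unfold Psi_U, zeta_minus_inv. rewrite (zeta_minus_eq rho Hc l H), (zeta_plus_eq rho Hc l H).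
  reflexivity.
Qed.

Definition dPsi rho Hc l u := - rho (Zmi rho Hc l u) / (1 - rho (Zmi rho Hc l u)).

Lemma Psi_deriv rho Hc l : YUd rho l -> forall u, 0 < u ->
  derivable_pt_lim (fun u => Zp rho Hc l (Zmi rho Hc l u)) u (dPsi rho Hc l u).
Proof.
  intros H u Hu. destruct (Zmi_deriv rho Hc l H u Hu) as [_ Hd].
  pose proof (derivable_pt_lim_comp _ _ _ _ _ Hd (Zp_deriv rho Hc l (Zmi rho Hc l u))) as Hc2.
  unfold dPsi. replace (- rho (Zmi rho Hc l u) / (1 - rho (Zmi rho Hc l u))) with
    (- rho (Zmi rho Hc l u) * (1 / (1 - rho (Zmi rho Hc l u)))).
  - exact Hc2.
  - destruct H as [H _]. specialize (H (Zmi rho Hc l u)). field. lra.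
Qed.

Lemma Psi_XU rho Hc l : YUd rho l -> in_XU (fun u => Zp rho Hc l (Zmi rho Hc l u)).
Proof.
  intros H. split; [|split; [|split]].
  - intros u _. apply Zp_pos; auto.
  - exists (dPsi rho Hc l). split; [|split].
    + apply Psi_deriv; auto.
    + intros u Hu. destruct (Zmi_deriv rho Hc l H u Hu) as [Hct _].
      assert (Hr : continuity_pt (fun u => rho (Zmi rho Hc l u)) u).
      { apply (continuity_pt_comp (Zmi rho Hc l) rho u Hct). apply Hc. }
      pose proof (proj1 H (Zmi rho Hc l u)).
      apply (continuity_pt_div (fun u => - rho (Zmi rho Hc l u)) (fun u => 1 - rho (Zmi rho Hc l u))).
      * apply (continuity_pt_opp (fun u => rho (Zmi rho Hc l u))). auto.
      * apply (continuity_pt_minus (fun _ => 1) (fun u => rho (Zmi rho Hc l u))); auto.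
        apply continuity_pt_const. intros ??; reflexivity.
      * lra.
    + intros u Hu. unfold dPsi. pose proof (proj1 H (Zmi rho Hc l u)).
      assert (0 < rho (Zmi rho Hc l u) / (1 - rho (Zmi rho Hc l u))) by (apply Rdiv_lt_0_compat; lra).
      unfold Rdiv in *. lra.
  - intros M. set (w0 := Rmin (-M) 0 - 1).
    exists (Zm rho Hc l w0). split; [apply Zm_pos; auto|].
    intros u [Hu1 Hu2].
    assert (Hz : Zmi rho Hc l u < w0).
    { destruct (Rlt_dec (Zmi rho Hc l u) w0) as [|Hn]; auto.
      assert (Zm rho Hc l w0 <= u).
      { destruct (Req_dec (Zmi rho Hc l u) w0) as [E|E].
        - rewrite <- E, Zmi_spec; auto; lra.
        - left. rewrite <- (Zmi_spec rho Hc l H u Hu1). apply Zm_incr; auto; lra. }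
      lra. }
    pose proof (Zp_decr rho Hc l H _ _ Hz).
    pose proof (Zm_Zp rho Hc l w0). pose proof (Zm_pos rho Hc l H w0).
    unfold w0 in *. pose proof (Rmin_l (-M) 0). lra.
  - intros eps He. destruct (Zp_lim0 rho Hc l H eps He) as [M0 HM0].
    exists (Zm rho Hc l M0). intros u Hu.
    pose proof (Zm_pos rho Hc l H M0).
    apply HM0. apply Zmi_lt; auto; lra.
Qed.

Lemma PhiPsi rho Hc l : YUd rho l -> forall v,
  Phi_U (fun u => Zp rho Hc l (Zmi rho Hc l u)) v = rho v.
Proof.
  intros H v. set (psi := fun u => Zp rho Hc l (Zmi rho Hc l u)).
  assert (HG : forall u, 0 < u -> G psi u = Zmi rho Hc l u).
  { intros u Hu. unfold G, psi. pose proof (Zm_Zp rho Hc l (Zmi rho Hc l u)).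
    rewrite Zmi_spec in H0 by auto. lra. }
  assert (HGi : Ginv psi v = Zm rho Hc l v).
  { unfold Ginv. apply Rchoose_eq.
    - split; [apply Zm_pos; auto|]. rewrite HG by (apply Zm_pos; auto). apply Zmi_Zm; auto.
    - intros y [Hy1 Hy2]. rewrite HG in Hy2 by auto. rewrite <- Hy2. rewrite Zmi_spec; auto. }
  unfold Phi_U. rewrite HGi.
  rewrite (der_eq psi _ (dPsi rho Hc l (Zm rho Hc l v))) by (apply Psi_deriv; auto; apply Zm_pos; auto).
  unfold dPsi. rewrite Zmi_Zm; auto.
  pose proof (proj1 H v). field. split; lra.
Qed.

Lemma PsiPhi psi : in_XU psi -> forall u, 0 < u -> Psi_U (Phi_U psi) u = psi u.
Proof.
  intros HX u Hu. destruct (XU_XUd psi HX) as [d H].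
  assert (Hzm : zeta_minus (Phi_U psi) = Ginv psi).
  { apply functional_extensionality. intros v. unfold zeta_minus. apply Rchoose_eq.
    - rewrite (Phi_formula psi d H). apply Phi_lower; auto.
    - intros y Hy. eapply lower_int_unique; eauto.
      rewrite (Phi_formula psi d H). apply Phi_lower; auto. }
  assert (Hzp : zeta_plus (Phi_U psi) = fun v => psi (Ginv psi v)).
  { apply functional_extensionality. intros v. unfold zeta_plus. apply Rchoose_eq.
    - rewrite (Phi_formula psi d H). apply Phi_upper; auto.
    - intros y Hy. eapply upper_int_unique; eauto.
      rewrite (Phi_formula psi d H). apply Phi_upper; auto. }
  unfold Psi_U, zeta_minus_inv. rewrite Hzm, Hzp.
  rewrite (Rchoose_eq _ (G psi u)).
  - rewrite (Gi_G psi d H); auto.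
  - apply (Gi_G psi d H); auto.
  - intros y Hy. rewrite <- Hy. destruct (Gi_spec psi d H y) as [_ E]. auto.
Qed.

Theorem proposition4p4 :
  (forall psi, in_XU psi -> forall v, exists! u, 0 < u /\ G psi u = v) /\
  (forall psi, in_XU psi -> in_YU (Phi_U psi)) /\
  (forall psi1 psi2, in_XU psi1 -> in_XU psi2 ->
     (forall v, Phi_U psi1 v = Phi_U psi2 v) -> forall u, 0 < u -> psi1 u = psi2 u) /\
  (forall rho, in_YU rho ->
     (forall v, lower_int (fun w => 1 - rho w) v (zeta_minus rho v)) /\
     (forall v, upper_int rho v (zeta_plus rho v)) /\
     (forall v, 0 < zeta_minus rho v) /\
     (forall u, 0 < u -> exists! v, zeta_minus rho v = u) /\
     (forall v, 0 < zeta_plus rho v) /\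
     (forall u, 0 < u -> exists! v, zeta_plus rho v = u) /\
     in_XU (Psi_U rho) /\
     (forall v, Phi_U (Psi_U rho) v = rho v)) /\
  (forall psi, in_XU psi -> forall u, 0 < u -> Psi_U (Phi_U psi) u = psi u).
Proof.
  split; [|split; [|split; [|split]]].
  - intros psi HX. destruct (XU_XUd psi HX) as [d H]. apply (G_bij psi d H).
  - intros psi HX. destruct (XU_XUd psi HX) as [d H]. apply (Phi_YU psi d H).
  - intros psi1 psi2 H1 H2 E u Hu.
    assert (E' : Phi_U psi1 = Phi_U psi2) by (apply functional_extensionality; auto).
    rewrite <- (PsiPhi psi1 H1 u Hu), <- (PsiPhi psi2 H2 u Hu), E'. reflexivity.
  - intros rho [Hc [Hb [l [Hl Hu]]]].
    assert (H : YUd rho l) by (split; [|split]; auto).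
    rewrite (Psi_eq rho Hc l H), (zeta_minus_eq rho Hc l H), (zeta_plus_eq rho Hc l H).
    split; [|split; [|split; [|split; [|split; [|split; [|split]]]]]].
    + apply Zm_lower; auto.
    + apply Zp_upper; auto.
    + apply Zm_pos; auto.
    + intros u Hu'. destruct (Zm_ex rho Hc l H u Hu') as [v Hv]. exists v. split; auto.
      intros y Hy. apply (Zm_inj rho Hc l H). congruence.
    + apply Zp_pos; auto.
    + intros u Hu'. destruct (Zp_ex rho Hc l H u Hu') as [v Hv]. exists v. split; auto.
      intros y Hy. apply (Zp_inj rho Hc l H). congruence.
    + apply Psi_XU; auto.
    + apply PhiPsi; auto.
  - exact PsiPhi.
Qed.
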